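(* Let $n\ge0$ and let \[\begin{array}{ccc} G&\to&H\\ \downarrow&&\downarrow\\ K&\to&L\end{array}\] be a commutative square of graphs such that (1) every morphism in the square is a monomorphism; (2) the square is a pullback in $\mathsf{Graph}$; and (3) every graph map $I_1^{\square n}\to L$ factors through $H\to L$ or through $K\to L$. Then this square is an $n$-skeletal pushout.
   Context: A graph is a set with a reflexive symmetric relation (edges); graph maps preserve the relation; $\mathsf{Graph}$ is their category. $I_1$ is the graph with two vertices joined by an edge, and $I_1^{\square n}$ is its $n$-fold box product, where the box product $G\square H$ has vertex set $V(G)\times V(H)$ and $(v,w)\sim(v',w')$ iff ($v=v'$, $w\sim w'$) or ($v\sim v'$, $w=w'$). The $1$-nerve $N_1G$ is the cubical set (presheaf on the box category with faces, degeneracies and connections) whose $k$-cubes are graph maps $I_1^{\square k}\to G$, with structure maps induced by the corresponding maps $I_1^{\square k}\to I_1^{\square j}$. $\operatorname{sk}^n$ of a cubical set is the subobject generated by cubes of dimension $\le n$. A commutative square of graphs is an $n$-skeletal pushout if applying $\operatorname{sk}^n\circ N_1$ yields a pushout square of cubical sets. *)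

(* Defs.v *)
From mathcomp Require Import all_boot.
From mathcomp Require Import zify.

Set Implicit Arguments.
Unset Strict Implicit.
Unset Printing Implicit Defensive.

Record graph := Graph {
  vert :> Type;
  adj : vert -> vert -> Prop;
  adj_refl : forall x, adj x x;
  adj_sym : forall x y, adj x y -> adj y x }.

Record hom (G H : graph) := Hom {
  hfun :> G -> H;
  hom_adj : forall x y, adj x y -> adj (hfun x) (hfun y) }.

Definition hcomp (G H K : graph) (g : hom H K) (f : hom G H) : hom G K.
Proof.
  refine (@Hom G K (fun x => g (f x)) _).
  by move=> x y hxy; apply: hom_adj; apply: hom_adj.
Defined.

Definition mono (G H : graph) (f : hom G H) : Prop :=
  forall (X : graph) (u v : hom X G),
    (forall x, f (u x) = f (v x)) -> forall x, u x = v x.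

Definition commutes (G H K L : graph) (f : hom G H) (g : hom G K)
  (h : hom H L) (k : hom K L) : Prop :=
  forall x, h (f x) = k (g x).

Definition is_pullback (G H K L : graph) (f : hom G H) (g : hom G K)
  (h : hom H L) (k : hom K L) : Prop :=
  forall (X : graph) (p : hom X H) (q : hom X K),
    (forall x, h (p x) = k (q x)) ->
    (exists u : hom X G, (forall x, f (u x) = p x) /\ (forall x, g (u x) = q x))
    /\ (forall u1 u2 : hom X G,
          (forall x, f (u1 x) = p x) -> (forall x, g (u1 x) = q x) ->
          (forall x, f (u2 x) = p x) -> (forall x, g (u2 x) = q x) ->
          forall x, u1 x = u2 x).

Definition box_adj (G H : graph) (p q : G * H) : Prop :=
  (p.1 = q.1 /\ adj p.2 q.2) \/ (adj p.1 q.1 /\ p.2 = q.2).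

Definition I1_adj (a b : bool) : Prop := True.

(* Adjacency of I_1^{box n} on vertex set bool^n, obtained by unfolding
   the iterated box product  I_1 box (I_1 box (... box pt)). *)
Fixpoint cube_adj (s t : seq bool) : Prop :=
  match s, t with
  | [::], [::] => True
  | a :: s', b :: t' => (a = b /\ cube_adj s' t') \/ (I1_adj a b /\ s' = t')
  | _, _ => False
  end.

Lemma cube_adj_refl n (s : n.-tuple bool) : cube_adj s s.
Proof.
  case: s => s _ /=; elim: s => [|a s IH] //=; by left.
Qed.

Lemma cube_adj_sym n (s t : n.-tuple bool) : cube_adj s t -> cube_adj t s.
Proof.
  case: s t => s _ [t _] /=; elim: s t => [|a s IH] [|b t] //=.
  case=> [[-> /IH h]|[_ ->]]; [by left | by right].
Qed.

Definition cube (n : nat) : graph :=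
  @Graph (n.-tuple bool) (fun s t => cube_adj s t)
         (@cube_adj_refl n) (@cube_adj_sym n).

(* Positions are 0-based.                                             *)
Lemma face_size m (i : 'I_m.+1) (e : bool) (t : m.-tuple bool) :
  size (take i t ++ e :: drop i t) == m.+1.
Proof.
  rewrite size_cat /= size_take size_drop size_tuple.
  case: ltnP => ?; have := ltn_ord i; move=> ?; apply/eqP; lia.
Qed.
Definition face m (i : 'I_m.+1) (e : bool) (t : m.-tuple bool) : m.+1.-tuple bool :=
  Tuple (face_size i e t).

Lemma degen_size m (i : 'I_m.+1) (t : m.+1.-tuple bool) :
  size (take i t ++ drop i.+1 t) == m.
Proof.
  rewrite size_cat size_take size_drop size_tuple.
  case: ltnP => ?; have := ltn_ord i; move=> ?; apply/eqP; lia.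
Qed.
Definition degen m (i : 'I_m.+1) (t : m.+1.-tuple bool) : m.-tuple bool :=
  Tuple (degen_size i t).

Lemma conn_size m (i : 'I_m.+1) (e : bool) (t : m.+2.-tuple bool) :
  size (take i t ++ (if e then nth false t i || nth false t i.+1
                     else nth false t i && nth false t i.+1) :: drop i.+2 t) == m.+1.
Proof.
  rewrite size_cat /= size_take size_drop size_tuple.
  case: ltnP => ?; have := ltn_ord i; move=> ?; apply/eqP; lia.
Qed.
Definition conn m (i : 'I_m.+1) (e : bool) (t : m.+2.-tuple bool) : m.+1.-tuple bool :=
  Tuple (conn_size i e t).

Inductive boxmap (k : nat) : forall m, (k.-tuple bool -> m.-tuple bool) -> Prop :=
| bm_id : boxmap (fun v => v)
| bm_face m (th : k.-tuple bool -> m.-tuple bool) (i : 'I_m.+1) (e : bool) :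
    boxmap th -> boxmap (fun v => face i e (th v))
| bm_degen m (th : k.-tuple bool -> m.+1.-tuple bool) (i : 'I_m.+1) :
    boxmap th -> boxmap (fun v => degen i (th v))
| bm_conn m (th : k.-tuple bool -> m.+2.-tuple bool) (i : 'I_m.+1) (e : bool) :
    boxmap th -> boxmap (fun v => conn i e (th v)).

(* (N_1 G)_k = hom (cube k) G; the structure map along th : [k] -> [m]  *)
(* sends y in (N_1 G)_m to y o th.                                    *)
(* (sk^n N_1 G)_k = the k-cubes of the form y o th with y an m-cube,  *)
(* m <= n, th a box-category map (subobject generated by cubes of     *)
(* dimension <= n).                                                   *)
Definition in_sk (n : nat) (G : graph) (k : nat) (x : hom (cube k) G) : Prop :=
  exists (m : nat) (th : k.-tuple bool -> m.-tuple bool) (y : hom (cube m) G),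
    [/\ m <= n, boxmap th & forall v, x v = y (th v)].

Definition sk_cubes (n : nat) (G : graph) (k : nat) : Type :=
  { x : hom (cube k) G | in_sk n x }.

Lemma in_sk_comp n (G H : graph) (f : hom G H) k (x : hom (cube k) G) :
  in_sk n x -> in_sk n (hcomp f x).
Proof.
  case=> m [th [y [hm hth hx]]]; exists m, th, (hcomp f y); split=> //.
  by move=> v /=; rewrite hx.
Qed.

Definition sk_map (n : nat) (G H : graph) (f : hom G H) (k : nat)
  (x : sk_cubes n G k) : sk_cubes n H k :=
  exist _ (hcomp f (proj1_sig x)) (in_sk_comp f (proj2_sig x)).

Definition is_pushout_set (A B C D : Type) (i : A -> B) (j : A -> C)
  (b : B -> D) (c : C -> D) : Prop :=
  (forall a, b (i a) = c (j a)) /\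
  forall (T : Type) (p : B -> T) (q : C -> T),
    (forall a, p (i a) = q (j a)) ->
    (exists u : D -> T, (forall x, u (b x) = p x) /\ (forall y, u (c y) = q y))
    /\ (forall u1 u2 : D -> T,
          (forall x, u1 (b x) = p x) -> (forall y, u1 (c y) = q y) ->
          (forall x, u2 (b x) = p x) -> (forall y, u2 (c y) = q y) ->
          forall d, u1 d = u2 d).

(* n-skeletal pushout: sk^n o N_1 of the square is a pushout of cubical
   sets; colimits of presheaves are computed levelwise, so this means a
   pushout of sets at every level k. *)
Definition skeletal_pushout (n : nat) (G H K L : graph) (f : hom G H)
  (g : hom G K) (h : hom H L) (k : hom K L) : Prop :=
  forall lvl : nat,
    is_pushout_set (@sk_map n _ _ f lvl) (@sk_map n _ _ g lvl)
                   (@sk_map n _ _ h lvl) (@sk_map n _ _ k lvl).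

(* Main.v *)
Require Import Defs.
From mathcomp Require Import all_boot zify.
From Stdlib Require Import FunctionalExtensionality ProofIrrelevance ClassicalEpsilon.
Set Implicit Arguments.
Unset Strict Implicit.

Lemma cube_adj_refl_seq (s : seq bool) : cube_adj s s.
Proof. by elim: s => [|a s IH] //=; left. Qed.

Lemma cube_adjP (s t : seq bool) : cube_adj s t <->
  size s = size t /\ exists j, forall i, i != j -> nth false s i = nth false t i.
Proof.
elim: s t => [|a s IH] [|b t] //=.
- split=> // _; split=> //; exists 0 => i _; by rewrite !nth_nil.
- by split=> // -[].
- by split=> // -[].
split.
- case=> [[-> /IH [hs [j hj]]]|[_ ->]].
    split; first by rewrite hs.
    exists j.+1 => -[|i] //= hi; apply: hj; by [].
  split=> //; exists 0 => -[|i] //.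
- case=> [[hs] [j hj]].
  case: (boolP (a == b)) => [/eqP ab|nab].
    left; split=> //; apply/IH; split=> //; exists j.-1 => i hi.
    have := hj i.+1; rewrite /=; apply; apply/eqP => E; move/eqP: hi; apply; lia.
  right; split=> //. apply: (@eq_from_nth _ false) => // i _.
  case: j hj => [|j] hj; first by apply: (hj i.+1).
  by move: (hj 0 isT) => /= ab; rewrite ab eqxx in nab.
Qed.

Lemma nth_face m (i : 'I_m.+1) e (t : m.-tuple bool) j :
  nth false (face i e t) j =
  if j < i then nth false t j else if j == i then e else nth false t j.-1.
Proof.
have hi := ltn_ord i.
rewrite /face /= nth_cat size_takel ?size_tuple //.
case: ltnP => hj; first by rewrite nth_take.
case: eqP => [->|hne]; first by rewrite subnn.
have -> : j - i = (j - i).-1.+1 by lia.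
by rewrite /= nth_drop; congr nth; lia.
Qed.

Lemma nth_degen m (i : 'I_m.+1) (t : m.+1.-tuple bool) j :
  nth false (degen i t) j = if j < i then nth false t j else nth false t j.+1.
Proof.
have hi := ltn_ord i.
rewrite /degen /= nth_cat size_takel ?size_tuple; last by lia.
case: ltnP => hj; first by rewrite nth_take.
by rewrite nth_drop; congr nth; lia.
Qed.

Definition bop (e a b : bool) := if e then a || b else a && b.

Lemma nth_conn m (i : 'I_m.+1) e (t : m.+2.-tuple bool) j :
  nth false (conn i e t) j =
  if j < i then nth false t j else if j == i then bop e (nth false t i) (nth false t i.+1)
  else nth false t j.+1.
Proof.
have hi := ltn_ord i.
rewrite /conn /= nth_cat size_takel ?size_tuple; last by lia.
case: ltnP => hj; first by rewrite nth_take.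
case: eqP => [->|hne]; first by rewrite subnn.
have -> : j - i = (j - i).-1.+1 by lia.
by rewrite /= nth_drop; congr nth; lia.
Qed.

Lemma face_adj m (i : 'I_m.+1) e (s t : m.-tuple bool) :
  cube_adj s t -> cube_adj (face i e s) (face i e t).
Proof.
move=> /cube_adjP [_ [j hj]]; apply/cube_adjP; split; first by rewrite !size_tuple.
exists (if j < i then j else j.+1) => x hx; rewrite !nth_face.
case: ltnP => h1; first by apply: hj; move: hx; case: ltnP => ? /eqP ?; apply/eqP; lia.
case: eqP => h2 //; apply: hj; move: hx; case: ltnP => ? /eqP ?; apply/eqP; lia.
Qed.

Lemma degen_adj m (i : 'I_m.+1) (s t : m.+1.-tuple bool) :
  cube_adj s t -> cube_adj (degen i s) (degen i t).
Proof.
move=> /cube_adjP [_ [j hj]]; apply/cube_adjP; split; first by rewrite !size_tuple.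
exists (if j < i then j else j.-1) => x hx; rewrite !nth_degen.
case: ltnP => h1; apply: hj; move: hx; case: ltnP => ? /eqP ?; apply/eqP; lia.
Qed.

Lemma conn_adj m (i : 'I_m.+1) e (s t : m.+2.-tuple bool) :
  cube_adj s t -> cube_adj (conn i e s) (conn i e t).
Proof.
move=> /cube_adjP [_ [j hj]]; apply/cube_adjP; split; first by rewrite !size_tuple.
exists (if j < i then j else if j <= i.+1 then (i : nat) else j.-1) => x hx; rewrite !nth_conn.
case: ltnP => h1.
  apply: hj; move: hx; case: ltnP => ?; [|case: leqP => ?]; move=> /eqP ?; apply/eqP; lia.
case: eqP => h2.
  subst x; have [hA hB] : ((i:nat) != j) /\ (i.+1 != j).
    by move: hx; case: ltnP => ?; [|case: leqP => ?]; move=> /eqP ?; split; apply/eqP; lia.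
  by rewrite (hj _ hA) (hj _ hB).
apply: hj; move: hx; case: ltnP => ?; [|case: leqP => ?]; move=> /eqP ?; apply/eqP; lia.
Qed.

Lemma boxmap_adj k m (th : k.-tuple bool -> m.-tuple bool) :
  boxmap th -> forall s t : k.-tuple bool, cube_adj s t -> cube_adj (th s) (th t).
Proof.
elim=> {m th} [|m th i e _ IH|m th i _ IH|m th i e _ IH] s t hst //.
- by apply: face_adj; apply: IH.
- by apply: degen_adj; apply: IH.
- by apply: conn_adj; apply: IH.
Qed.

Definition face_hom m (i : 'I_m.+1) e : hom (cube m) (cube m.+1) :=
  @Hom (cube m) (cube m.+1) (face i e) (@face_adj m i e).
Definition degen_hom m (i : 'I_m.+1) : hom (cube m.+1) (cube m) :=
  @Hom (cube m.+1) (cube m) (degen i) (@degen_adj m i).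

Definition comb (e : bool) (o1 o2 : option bool) : option bool :=
  match o1, o2 with
  | Some a, Some b => Some (bop e a b)
  | Some a, None => if a == e then Some a else None
  | None, Some b => if b == e then Some b else None
  | None, None => None
  end.

Lemma boxmap_sec k m (th : k.-tuple bool -> m.-tuple bool) : boxmap th ->
  exists (c : nat -> option bool) (sg : hom (cube m) (cube k)),
   (forall v j a, c j = Some a -> nth false (th v) j = a) /\
   (forall w j, j < m -> nth false (th (sg w)) j =
                           if c j is Some a then a else nth false w j).
Proof.
elim=> {m th} [|m th i e _ [c [sg [H1 H2]]]|m th i _ [c [sg [H1 H2]]]
               |m th i e _ [c [sg [H1 H2]]]].
- exists (fun _ => None), (@Hom (cube k) (cube k) id (fun _ _ h => h)).
  by split.
- exists (fun j => if j < i then c j else if j == i then Some e else c j.-1).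
  exists (hcomp sg (degen_hom i)); split.
    move=> v j a; rewrite nth_face; case: ltnP => ?; first exact: H1.
    by case: eqP => _; [case=> -> | exact: H1].
  move=> w j hj /=; rewrite nth_face.
  case: ltnP => h1; first by rewrite H2 ?nth_degen ?h1 //; have := ltn_ord i; lia.
  case: eqP => h2 //; rewrite H2 ?nth_degen; last by lia.
  have -> : (j.-1 < i) = false by apply/negbTE; rewrite -leqNgt; lia.
  by have -> : j.-1.+1 = j by lia.
- exists (fun j => if j < i then c j else c j.+1).
  exists (hcomp sg (face_hom i false)); split.
    by move=> v j a; rewrite nth_degen; case: ltnP => ?; exact: H1.
  move=> w j hj /=; rewrite nth_degen.
  case: ltnP => h1; first by rewrite H2 ?nth_face ?h1 //; lia.
  rewrite H2 ?nth_face; last by lia.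
  have -> : (j.+1 < i) = false by apply/negbTE; rewrite -leqNgt; lia.
  by have -> : (j.+1 == i) = false by apply/negbTE/eqP; lia.
- exists (fun j => if j < i then c j else if j == i then comb e (c i) (c i.+1) else c j.+1).
  pose kk : 'I_m.+2 := inord (if c i is None then i.+1 else i).
  have hkk : (kk : nat) = (if c i is None then i.+1 else i).
    rewrite /kk inordK //; have := ltn_ord i; case: (c i) => *; lia.
  exists (hcomp sg (face_hom kk (~~ e))); split.
    move=> v j a; rewrite nth_conn; case: ltnP => ?; first exact: H1.
    case: eqP => [_|_]; last exact: H1.
    have E1 := H1 v i; have E2 := H1 v i.+1.
    case: (c i) E1 => [a1|] E1; case: (c i.+1) E2 => [a2|] E2 /=.
    + by case=> <-; rewrite (E1 a1) // (E2 a2).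
    + case: eqP => [ea|] // [<-]; subst a1; rewrite (E1 e) //; by case: e {E1 E2}.
    + case: eqP => [ea|] // [<-]; subst a2; rewrite (E2 e) //; case: e {E1 E2} => /=;
        by rewrite ?orbT ?andbF.
    + by [].
  move=> w j hj /=; rewrite nth_conn.
  case: ltnP => h1.
    rewrite H2 ?nth_face ?hkk; last by lia.
    by have -> : j < (if c i is None then i.+1 else i) by case: (c i); lia.
  case: eqP => h2.
    subst j; rewrite !H2 ?nth_face ?hkk; try lia.
    case: (c i) => [a1|] /=.
      have -> : (i.+1 < i) = false by apply/negbTE; rewrite -leqNgt; lia.
      have -> : (i.+1 == i) = false by apply/negbTE/eqP; lia.
      case: (c i.+1) => [a2|] /=; case: e; case: a1 => //; try case: a2 => //;
        case: (nth false w i) => //.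
    rewrite ?ltnn ?eqxx ?ltnSn /=.
    case: (c i.+1) => [a2|] /=; case: e => //; try case: a2 => //;
        case: (nth false w i) => //.
  rewrite H2 ?nth_face ?hkk; last by lia.
  have -> : (j.+1 < (if c i is None then i.+1 else i)) = false.
    by apply/negbTE; rewrite -leqNgt; case: (c i); lia.
  have -> : (j.+1 == (if c i is None then i.+1 else i)) = false.
    by apply/negbTE/eqP; case: (c i); lia.
  by [].
Qed.

Lemma boxmap_sec' k m (th : k.-tuple bool -> m.-tuple bool) : boxmap th ->
  exists sg : hom (cube m) (cube k), forall v, th (sg (th v)) = th v.
Proof.
case/boxmap_sec=> c [sg [H1 H2]]; exists sg => v.
apply: val_inj; apply: (@eq_from_nth _ false); first by rewrite !size_tuple.
move=> j; rewrite size_tuple => hj; rewrite H2 //.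
by case E: (c j) => [a|] //; rewrite (H1 v j a).
Qed.

Lemma hom_ext (G H : graph) (u v : hom G H) : (forall x, u x = v x) -> u = v.
Proof.
case: u v => fu pu [fv pv] /= E.
have ? := functional_extensionality fu fv E; subst fv.
by rewrite (proof_irrelevance _ pu pv).
Qed.

Lemma sk_ext n (G : graph) k (a b : sk_cubes n G k) :
  (forall v, proj1_sig a v = proj1_sig b v) -> a = b.
Proof.
case: a b => [x px] [y py] /= E; have ? := @hom_ext (cube k) G x y E; subst y.
by rewrite (proof_irrelevance _ px py).
Qed.

Definition ptg : graph := @Graph unit (fun _ _ => True) (fun _ => I) (fun _ _ _ => I).

Lemma mono_inj (G H : graph) (f : hom G H) : mono f -> forall x y, f x = f y -> x = y.
Proof.
move=> mf x y E.
pose u := @Hom ptg G (fun _ => x) (fun _ _ _ => adj_refl x).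
pose v := @Hom ptg G (fun _ => y) (fun _ _ _ => adj_refl y).
exact: (mf ptg u v (fun _ => E) tt).
Qed.

Lemma cons_adj m (s t : m.-tuple bool) :
  cube_adj s t -> cube_adj (cons_tuple false s) (cons_tuple false t).
Proof. by move=> h /=; left. Qed.
Lemma behead_adj m (s t : m.+1.-tuple bool) :
  cube_adj s t -> cube_adj (behead_tuple s) (behead_tuple t).
Proof.
case: s t => [[|a s] hs] [[|b t] ht] //= [[_ h]|[_ ->]] //.
exact: cube_adj_refl_seq.
Qed.

Definition cons_hom m : hom (cube m) (cube m.+1) := @Hom (cube m) (cube m.+1) _ (@cons_adj m).
Definition behead_hom m : hom (cube m.+1) (cube m) := @Hom (cube m.+1) (cube m) _ (@behead_adj m).

Lemma lift_fact n (H K L : graph) (h : hom H L) (k : hom K L) :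
  (forall x : hom (cube n) L,
      (exists y : hom (cube n) H, forall v, h (y v) = x v) \/
      (exists z : hom (cube n) K, forall v, k (z v) = x v)) ->
  forall d m, m + d = n -> forall x : hom (cube m) L,
      (exists y : hom (cube m) H, forall v, h (y v) = x v) \/
      (exists z : hom (cube m) K, forall v, k (z v) = x v).
Proof.
move=> hyp; elim=> [|d IH] m hm x.
  rewrite addn0 in hm; subst m; exact: hyp.
have hm' : m.+1 + d = n by lia.
have hb : forall v : cube m, behead_tuple (cons_tuple false v) = v by move=> v; apply: val_inj.
case: (IH _ hm' (hcomp x (behead_hom m))) => [[y hy]|[z hz]].
  by left; exists (hcomp y (cons_hom m)) => v /=; rewrite hy /= hb.
by right; exists (hcomp z (cons_hom m)) => v /=; rewrite hz /= hb.
Qed.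

Definition th_hom k m (th : k.-tuple bool -> m.-tuple bool) (hb : boxmap th) :
  hom (cube k) (cube m) := @Hom (cube k) (cube m) th (boxmap_adj hb).

Lemma sk_map_inj n (G H : graph) (f : hom G H) lvl : mono f ->
  forall a b : sk_cubes n G lvl, sk_map f a = sk_map f b -> a = b.
Proof.
move=> mf a b E; apply: sk_ext => v; apply: (mono_inj mf).
by have := f_equal (fun s => hfun (proj1_sig s) v) E.
Qed.

Theorem lemma2p7 (n : nat) (G H K L : graph)
  (f : hom G H) (g : hom G K) (h : hom H L) (k : hom K L) :
  commutes f g h k ->
  mono f -> mono g -> mono h -> mono k ->
  is_pullback f g h k ->
  (forall x : hom (cube n) L,
      (exists y : hom (cube n) H, forall v, h (y v) = x v) \/
      (exists z : hom (cube n) K, forall v, k (z v) = x v)) ->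
  skeletal_pushout n f g h k.
Proof.
move=> hc mf mg mh mk pb hyp lvl.
have cover : forall d : sk_cubes n L lvl,
    (exists y, sk_map h y = d) \/ (exists z, sk_map k z = d).
  case=> x [m [th [y0 [hmn hb hx]]]].
  have [d hd] : exists d, m + d = n by exists (n - m); lia.
  case: (lift_fact hyp hd y0) => [[y1 hy1]|[z1 hz1]].
    left.
    have P : in_sk n (hcomp y1 (th_hom hb)) by exists m, th, y1.
    by exists (exist _ _ P); apply: sk_ext => v /=; rewrite hy1 hx.
  right.
  have P : in_sk n (hcomp z1 (th_hom hb)) by exists m, th, z1.
  by exists (exist _ _ P); apply: sk_ext => v /=; rewrite hz1 hx.
have inter : forall (y : sk_cubes n H lvl) (z : sk_cubes n K lvl), sk_map h y = sk_map k z ->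
    exists a, sk_map f a = y /\ sk_map g a = z.
  move=> y z E; case: y E => yx py E; have [m [th [y0 [hmn hb hy]]]] := py; case: z E => zx pz E.
  have E' : forall v, h (yx v) = k (zx v).
    by move=> v; have := f_equal (fun s => hfun (proj1_sig s) v) E.
  case: (pb _ yx zx E') => [[w [hw1 hw2]] _].
  case: (boxmap_sec' hb) => sg hsg.
  have P : in_sk n w.
    exists m, th, (hcomp w sg); split=> // v /=.
    apply: (mono_inj mf); rewrite !hw1 !hy; by rewrite hsg.
  exists (exist _ w P); split; apply: sk_ext => v /=; by [apply: hw1 | apply: hw2].
split.
  by move=> a; apply: sk_ext => v /=; exact: hc.
move=> T p q hpq; split.
  pose u (d : sk_cubes n L lvl) : T :=
    match excluded_middle_informative (exists y, sk_map h y = d) with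
    | left H1 => p (proj1_sig (constructive_indefinite_description _ H1))
    | right H2 => q (proj1_sig (constructive_indefinite_description
                      (fun z => sk_map k z = d) (or_ind (fun H => False_ind _ (H2 H)) id (cover d))))
    end.
  exists u; split.
    move=> x; rewrite /u; case: excluded_middle_informative => [H1|H2].
      case: constructive_indefinite_description => y /= /(sk_map_inj mh) ->; by [].
    by exfalso; apply: H2; exists x.
  move=> y; rewrite /u; case: excluded_middle_informative => [H1|H2].
    case: constructive_indefinite_description => y' /= /inter [a [<- <-]]; exact: hpq.
  case: constructive_indefinite_description => z /= /(sk_map_inj mk) ->; by [].
move=> u1 u2 h1 h2 h3 h4 d.
by case: (cover d) => [[y <-]|[z <-]]; rewrite ?h1 ?h3 ?h2 ?h4.
Qed.
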